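(* Let $X=\nu_{d_1,\dots,d_k}(\mathbb{P}^{n_1}\times\cdots\times\mathbb{P}^{n_k})\subset\mathbb{P}^N$ and $p\in\mathbb{P}^N$. Let $\Gamma\subset\mathbb{P}^{n_1}\times\cdots\times\mathbb{P}^{n_k}$ be a minimal zero-dimensional scheme such that $p\in\langle\nu_{d_1,\dots,d_k}(\Gamma)\rangle$, and for each $i$ let $L_i=\langle\pi_i(\Gamma)\rangle\subset\mathbb{P}^{n_i}$, a linear subspace of dimension $m_i\le\deg(\pi_i(\Gamma))-1$. Then $r_X(p)=r_Y(p)$, where $Y=\nu_{d_1,\dots,d_k}(L_1\times\cdots\times L_k)\cong\nu_{d_1,\dots,d_k}(\mathbb{P}^{m_1}\times\cdots\times\mathbb{P}^{m_k})$. In particular, if $\deg(\pi_i(\Gamma))=1$ for some $i$, then $L_i$ is a point and $Y$ is isomorphic to the Segre-Veronese variety of the product of the remaining $k-1$ factors $\mathbb{P}^{m_j}$, $j\neq i$, embedded with multidegree $(d_j)_{j\ne i}$.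
   Context: Work over an algebraically closed field. $\nu_{d_1,\dots,d_k}$ is the Segre-Veronese embedding by $|\mathcal{O}(d_1,\dots,d_k)|$; $\pi_i:\mathbb{P}^{n_1}\times\cdots\times\mathbb{P}^{n_k}\to\mathbb{P}^{n_i}$ is the $i$-th projection and $\pi_i(\Gamma)$ the scheme-theoretic image. $\langle\cdot\rangle$ is linear span. For a subvariety $W\subset\mathbb{P}^N$, the $W$-rank $r_W(p)$ of $p\in\langle W\rangle$ is the minimal $s$ such that $p$ lies in the span of $s$ points of $W$. *)

(* Defs.v *)
From HB Require Import structures.
From mathcomp Require Import all_boot all_order all_algebra.
Set Implicit Arguments. Unset Strict Implicit. Unset Printing Implicit Defensive.
Import GRing.Theory.
Local Open Scope ring_scope.

(* Ambient: P^{n_0} x ... x P^{n_{k-1}} over a field F.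
   Variables x_{i,j}, i < k, j <= n_i.  A multidegree is a function 'I_k -> nat. *)
Section SegreVeronese.
Variable F : fieldType.
Variable k : nat.
Variable n : 'I_k -> nat.

Definition var := {i : 'I_k & 'I_(n i).+1}.
Definition mvar (i : 'I_k) (j : 'I_(n i).+1) : var := Tagged (fun i => 'I_(n i).+1) j.

Definition multideg := {ffun 'I_k -> nat}.
Definition monomial := {ffun var -> nat}.

Definition mdeg (m : monomial) : multideg :=
  [ffun i => (\sum_(j < (n i).+1) m (@mvar i j))%N].

Definition unitmd (i : 'I_k) : multideg := [ffun j => nat_of_bool (j == i)].
Definition addmd (a b : multideg) : multideg := [ffun i => (a i + b i)%N].
Definition constmd (t : nat) : multideg := [ffun _ => t].

(* A multihomogeneous mform (or a vector of coordinates of P^N indexed by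
   monomials): a coefficient function on monomials. *)
Definition mform := monomial -> F.
Definition homog (a : multideg) (f : mform) : Prop :=
  forall m, f m != 0 -> mdeg m = a.

Definition mulmon (mu : monomial) (f : mform) : mform :=
  fun m => if [forall v, (mu v <= m v)%N] then f [ffun v => (m v - mu v)%N] else 0.

(* finite enumeration of the monomials of multidegree a *)
Definition mbound (a : multideg) : nat := (\max_(i < k) a i)%N.
Definition toN (a : multideg) (e : {ffun var -> 'I_(mbound a).+1}) : monomial :=
  [ffun v => nat_of_ord (e v)].

Definition evalf (a : multideg) (f : mform) (x : var -> F) : F :=
  \sum_(e : {ffun var -> 'I_(mbound a).+1} | mdeg (toN e) == a)
     f (toN e) * \prod_(v : var) x v ^+ (e v).

(* the linear mform f (of degree a) paired with the coordinate vector p *)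
Definition pairing (a : multideg) (f : mform) (p : mform) : F :=
  \sum_(e : {ffun var -> 'I_(mbound a).+1} | mdeg (toN e) == a)
     f (toN e) * p (toN e).

Definition sv (d : multideg) (x : var -> F) : mform :=
  fun m => if mdeg m == d then \prod_(v : var) x v ^+ (m v) else 0.

(* ----- closed subschemes = B-saturated multihomogeneous ideals -----
   I a f  means  f is in the degree-a component I_a. *)
Definition mideal := multideg -> mform -> Prop.

Record homog_ideal (I : mideal) : Prop := {
  hi_homog : forall a f, I a f -> homog a f;
  hi_zero  : forall a, I a (fun _ => 0);
  hi_add   : forall a f g, I a f -> I a g -> I a (fun m => f m + g m);
  hi_scale : forall a c f, I a f -> I a (fun m => c * f m);
  hi_mul   : forall a f mu, I a f -> I (addmd a (mdeg mu)) (mulmon mu f)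
}.

(* saturation w.r.t. the irrelevant ideal B = m_0 ... m_{k-1};
   B^t is generated by the monomials of multidegree (t,...,t) *)
Definition saturated (I : mideal) : Prop :=
  forall a f, homog a f ->
    (exists t, forall mu : monomial, mdeg mu = constmd t ->
        I (addmd a (mdeg mu)) (mulmon mu f)) -> I a f.

Definition closed_subscheme (I : mideal) : Prop := homog_ideal I /\ saturated I.

(* zero-dimensional: bounded Hilbert function, i.e. there is r with
   dim S_a / I_a <= r for every multidegree a *)
Definition zero_dim_scheme (I : mideal) : Prop :=
  closed_subscheme I /\
  exists r : nat, forall a (g : 'I_r.+1 -> mform), (forall t, homog a (g t)) ->
    exists c : 'I_r.+1 -> F, (exists t, c t != 0) /\
      I a (fun m => \sum_(t < r.+1) c t * g t m).

Definition subscheme (J I : mideal) : Prop := forall a f, I a f -> J a f.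

(* p lies in the linear span < nu_d(Gamma) >: every linear mform on P^N
   vanishing on nu_d(Gamma) (= element of I_d) vanishes at p *)
Definition in_span_scheme (I : mideal) (d : multideg) (p : mform) : Prop :=
  forall f, I d f -> pairing d f p = 0.

Definition blocknz (x : var -> F) (i : 'I_k) : Prop := exists j : 'I_(n i).+1, x (@mvar i j) != 0.

Definition in_product (x : var -> F) : Prop := forall i, blocknz x i.

(* points of L_0 x ... x L_{k-1}, L_i = < pi_i(Gamma) >, cut out by the linear
   forms in I cap F[x_i], i.e. by I_{e_i} *)
Definition in_spans_proj (I : mideal) (x : var -> F) : Prop :=
  forall i, blocknz x i /\ forall f, I (unitmd i) f -> evalf (unitmd i) f x = 0.

Definition rank_le (P : (var -> F) -> Prop) (d : multideg) (p : mform) (s : nat) : Prop :=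
  exists (xs : 'I_s -> var -> F) (c : 'I_s -> F),
    (forall t, P (xs t)) /\ forall m, p m = \sum_(t < s) c t * sv d (xs t) m.

Definition is_rank (P : (var -> F) -> Prop) (d : multideg) (p : mform) (r : nat) : Prop :=
  rank_le P d p r /\ forall s, (s < r)%N -> ~ rank_le P d p s.

End SegreVeronese.

(* Main.v *)
Require Import Defs.
From mathcomp Require Import all_boot all_order all_algebra.
From Stdlib Require Import Classical ClassicalEpsilon FunctionalExtensionality.
From mathcomp Require Import zify ring.
Set Implicit Arguments. Unset Strict Implicit. Unset Printing Implicit Defensive.
Import GRing.Theory.
Local Open Scope ring_scope.

Definition xpow (F : fieldType) (k : nat) (n : 'I_k -> nat) (x : var n -> F) (m : monomial n) : F :=
  \prod_(v : var n) x v ^+ m v.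

Definition msum (F : fieldType) (k : nat) (n : 'I_k -> nat) (a : multideg k) (G : monomial n -> F) : F :=
  \sum_(e : {ffun var n -> 'I_(mbound a).+1} | mdeg (toN e) == a) G (toN e).

Lemma evalfE (F : fieldType) (k : nat) (n : 'I_k -> nat) a (f : mform F n) x :
  evalf a f x = msum a (fun m => f m * xpow x m).
Proof.
rewrite /evalf /msum; apply: eq_bigr => e _; congr (_ * _).
by apply: eq_bigr => v _; rewrite /toN ffunE.
Qed.

Lemma entry_le (k : nat) (n : 'I_k -> nat) (m : monomial n) (v : var n) :
  (m v <= mdeg m (tag v))%N.
Proof.
case: v => i j /=; rewrite /mdeg ffunE.
by rewrite (bigD1 j) //= leq_addr.
Qed.

Lemma entry_le_bound (k : nat) (n : 'I_k -> nat) (m : monomial n) (v : var n) a :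
  mdeg m = a -> (m v <= mbound a)%N.
Proof.
move=> <-; apply: leq_trans (entry_le m v) _.
by rewrite /mbound; apply: (@leq_bigmax _ (fun i => mdeg m i)).
Qed.

Lemma toN_inj (k : nat) (n : 'I_k -> nat) (a : multideg k) : injective (@toN k n a).
Proof.
move=> e1 e2 /ffunP h; apply/ffunP => v; apply: val_inj.
by have := h v; rewrite !ffunE.
Qed.

Lemma msum_ext (F : fieldType) (k : nat) (n : 'I_k -> nat) a (G1 G2 : monomial n -> F) :
  (forall m, mdeg m = a -> G1 m = G2 m) -> msum a G1 = msum a G2.
Proof. by move=> h; apply: eq_bigr => e /eqP /h. Qed.

Lemma msumD (F : fieldType) (k : nat) (n : 'I_k -> nat) a (G1 G2 : monomial n -> F) :
  msum a (fun m => G1 m + G2 m) = msum a G1 + msum a G2.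
Proof. by rewrite /msum big_split. Qed.

Lemma msumZ (F : fieldType) (k : nat) (n : 'I_k -> nat) a c (G : monomial n -> F) :
  msum a (fun m => c * G m) = c * msum a G.
Proof. by rewrite /msum mulr_sumr. Qed.

Lemma msum0 (F : fieldType) (k : nat) (n : 'I_k -> nat) a :
  msum a (fun m : monomial n => 0 : F) = 0.
Proof. by rewrite /msum big1. Qed.

Lemma msum_sum (F : fieldType) (k : nat) (n : 'I_k -> nat) a s (G : 'I_s -> monomial n -> F) :
  msum a (fun m => \sum_(t < s) G t m) = \sum_(t < s) msum a (G t).
Proof. by rewrite /msum exchange_big. Qed.

Lemma msum_delta (F : fieldType) (k : nat) (n : 'I_k -> nat) a (m0 : monomial n) (G : monomial n -> F) :
  mdeg m0 = a -> msum a (fun m => (m == m0)%:R * G m) = G m0.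
Proof.
move=> hm0; rewrite /msum.
pose e0 : {ffun var n -> 'I_(mbound a).+1} := [ffun v => inord (m0 v)].
have he0 : toN e0 = m0.
  apply/ffunP => v; rewrite !ffunE inordK //; rewrite ltnS; exact: entry_le_bound.
rewrite (bigD1 e0) /=; last by rewrite he0 hm0.
rewrite he0 eqxx mul1r big1 ?addr0 // => e /andP [_ ne].
case: eqP => [h|]; last by rewrite mul0r.
by rewrite -he0 in h; move: ne; rewrite (toN_inj h) eqxx.
Qed.

Definition mon1 (k : nat) (n : 'I_k -> nat) (v : var n) : monomial n := [ffun u => nat_of_bool (u == v)].
Definition addm (k : nat) (n : 'I_k -> nat) (m1 m2 : monomial n) : monomial n := [ffun u => (m1 u + m2 u)%N].

Lemma mdeg_add (k : nat) (n : 'I_k -> nat) (m1 m2 : monomial n) :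
  mdeg (addm m1 m2) = addmd (mdeg m1) (mdeg m2).
Proof.
apply/ffunP => i; rewrite /mdeg /addmd !ffunE -big_split /=.
by apply: eq_bigr => j _; rewrite ffunE.
Qed.

Lemma mvar_eq (k : nat) (n : 'I_k -> nat) (i i' : 'I_k) (j : 'I_(n i).+1) (j' : 'I_(n i').+1) :
  (@mvar k n i j == @mvar k n i' j') -> i = i'.
Proof. by move/eqP => h; have := congr1 (@tag _ _) h. Qed.

Lemma mvar_eq_same (k : nat) (n : 'I_k -> nat) (i : 'I_k) (j j' : 'I_(n i).+1) :
  (@mvar k n i j == @mvar k n i j') = (j == j').
Proof. by rewrite /mvar eq_Tagged. Qed.

Lemma mdeg_mon1 (k : nat) (n : 'I_k -> nat) (i : 'I_k) (j : 'I_(n i).+1) :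
  mdeg (mon1 (@mvar k n i j)) = unitmd i.
Proof.
apply/ffunP => i'; rewrite /mdeg /unitmd !ffunE.
case: (eqVneq i' i) => [->|ne].
  rewrite (bigD1 j) //= ffunE mvar_eq_same eqxx big1 // => j' nj.
  by rewrite ffunE mvar_eq_same (negbTE nj).
rewrite big1 // => j' _; rewrite ffunE.
case: eqP => // /eqP /mvar_eq h; by rewrite h eqxx in ne.
Qed.

Lemma mdeg_mon1v (k : nat) (n : 'I_k -> nat) (v : var n) :
  mdeg (mon1 v) = unitmd (tag v).
Proof. by case: v => i j; exact: mdeg_mon1. Qed.

Lemma xpow_add (F : fieldType) (k : nat) (n : 'I_k -> nat) (x : var n -> F) m1 m2 :
  xpow x (addm m1 m2) = xpow x m1 * xpow x m2.
Proof. by rewrite /xpow -big_split; apply: eq_bigr => v _; rewrite ffunE exprD. Qed.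

Lemma xpow_mon1 (F : fieldType) (k : nat) (n : 'I_k -> nat) (x : var n -> F) v :
  xpow x (mon1 v) = x v.
Proof.
rewrite /xpow (bigD1 v) //= ffunE eqxx expr1 big1 ?mulr1 // => u nu.
by rewrite ffunE (negbTE nu) expr0.
Qed.

Lemma mdeg_le_bound (k : nat) (a b : multideg k) :
  (forall i, a i <= b i)%N -> (mbound a <= mbound b)%N.
Proof.
move=> h; rewrite /mbound; apply/bigmax_leqP => i _.
by apply: leq_trans (h i) _; apply: (@leq_bigmax _ (fun i => b i)).
Qed.

Lemma msum_shift (F : fieldType) (k : nat) (n : 'I_k -> nat) a (mu : monomial n) (G : monomial n -> F) :
  msum (addmd a (mdeg mu))
    (fun m => if [forall v, (mu v <= m v)%N] then G [ffun v => (m v - mu v)%N] else 0)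
  = msum a G.
Proof.
set b := addmd a (mdeg mu).
have hab : (mbound a <= mbound b)%N.
  by apply: mdeg_le_bound => i; rewrite /b /addmd ffunE leq_addr.
rewrite /msum.
rewrite -big_mkcondr /=.
pose h (e : {ffun var n -> 'I_(mbound a).+1}) : {ffun var n -> 'I_(mbound b).+1} :=
  [ffun v => inord (e v + mu v)].
pose h' (e : {ffun var n -> 'I_(mbound b).+1}) : {ffun var n -> 'I_(mbound a).+1} :=
  [ffun v => inord (e v - mu v)].
have key : forall e : {ffun var n -> 'I_(mbound b).+1},
    mdeg (toN e) == b -> [forall v, (mu v <= toN e v)%N] ->
    mdeg [ffun v => (toN e v - mu v)%N] = a.
  move=> e /eqP he /forallP hle.
  have : mdeg (addm [ffun v => (toN e v - mu v)%N] mu) = b.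
    apply: etrans he; congr mdeg; apply/ffunP => v; rewrite !ffunE subnK //.
    by have := hle v; rewrite ffunE.
  rewrite mdeg_add /b => /ffunP hh; apply/ffunP => i; have := hh i.
  by rewrite /addmd !ffunE => /eqP; rewrite eqn_add2r => /eqP.
have hNgen : forall e, [forall v, (mu v <= toN (h e) v)%N] -> toN (h e) = addm (toN e) mu.
  move=> e hf.
  apply/ffunP => v; rewrite !ffunE.
  move/forallP: hf => /(_ v); rewrite !ffunE.
  rewrite /inord /insubd; case: insubP => [u _ ->|] //=.
  move=> hn; rewrite leqn0 => /eqP hmu; move: hn.
  by rewrite hmu addn0 ltnS (leq_trans _ hab) // -ltnS ltn_ord.
rewrite (reindex_onto h h').
  apply: eq_big => e.
    apply/idP/idP.
      case/andP => /andP [hb hf] /eqP hh.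
      have hN := hNgen e hf.
      move: hb; rewrite hN mdeg_add /b => /eqP /ffunP hh2; apply/eqP/ffunP => i.
      by have := hh2 i; rewrite /addmd !ffunE => /eqP; rewrite eqn_add2r => /eqP.
    move=> /eqP he.
    have hN : toN (h e) = addm (toN e) mu.
      apply/ffunP => v; rewrite !ffunE inordK // ltnS.
      have := entry_le_bound (m := addm (toN e) mu) v (erefl _).
      by rewrite mdeg_add he -/b /addm /toN !ffunE.
    rewrite hN mdeg_add he eqxx /=.
    apply/andP; split.
      by apply/forallP => v; rewrite ffunE leq_addl.
    apply/eqP/ffunP => v; apply: val_inj; rewrite !ffunE /= inordK.
      by have := congr1 (fun m : monomial n => m v) hN; rewrite /toN !ffunE => ->; rewrite addnK.
    by have := congr1 (fun m : monomial n => m v) hN; rewrite /toN !ffunE => ->; rewrite addnK ltn_ord.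
  case/andP => /andP [hb hf] _.
  congr G; apply/ffunP => v; rewrite ffunE (hNgen e hf) /addm /toN !ffunE.
  by rewrite addnK.
move=> e /andP [hb hf].
apply/ffunP => v; apply: val_inj; rewrite !ffunE.
have hle := (forallP hf v); rewrite ffunE in hle.
rewrite (@inordK (mbound a)); last first.
  rewrite ltnS; have := entry_le_bound (m := [ffun v => (toN e v - mu v)%N]) v (key e hb hf).
  by rewrite ffunE /toN ffunE.
by rewrite subnK // inord_val.
Qed.

Lemma evalf_mulmon (F : fieldType) (k : nat) (n : 'I_k -> nat) a b (mu : monomial n) (g : mform F n) x :
  b = addmd a (mdeg mu) -> evalf b (mulmon mu g) x = xpow x mu * evalf a g x.
Proof.
move=> ->; rewrite !evalfE -msumZ -(msum_shift a mu); apply: msum_ext => m _.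
rewrite /mulmon; case: ifP => [/forallP hle|]; last by rewrite mul0r.
rewrite mulrCA; congr (_ * _).
have -> : m = addm [ffun v => (m v - mu v)%N] mu.
  by apply/ffunP => v; rewrite !ffunE subnK.
rewrite xpow_add mulrC; congr (_ * _).
by congr xpow; apply/ffunP => v; rewrite !ffunE addnK.
Qed.

Definition delta (F : fieldType) (k : nat) (n : 'I_k -> nat) (m0 : monomial n) : mform F n :=
  fun m => (m == m0)%:R.

Lemma evalf_delta (F : fieldType) (k : nat) (n : 'I_k -> nat) a (m0 : monomial n) (x : var n -> F) :
  mdeg m0 = a -> evalf a (delta F m0) x = xpow x m0.
Proof. by move=> h; rewrite evalfE msum_delta. Qed.

Lemma pairing_delta (F : fieldType) (k : nat) (n : 'I_k -> nat) a (m0 : monomial n) (q : mform F n) :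
  mdeg m0 = a -> pairing a (delta F m0) q = q m0.
Proof. by move=> h; exact: (@msum_delta F k n a m0 q h). Qed.

Definition linform (F : fieldType) (k : nat) (n : 'I_k -> nat) (i : 'I_k) (w : 'rV[F]_(n i).+1) : mform F n :=
  fun m => \sum_(j < (n i).+1) w 0 j * (m == mon1 (@mvar k n i j))%:R.

Lemma evalf_linform (F : fieldType) (k : nat) (n : 'I_k -> nat) i (w : 'rV[F]_(n i).+1) x :
  evalf (unitmd i) (linform w) x = \sum_(j < (n i).+1) w 0 j * x (@mvar k n i j).
Proof.
rewrite evalfE /linform.
rewrite (@msum_ext _ _ _ _ _ (fun m => \sum_(j < (n i).+1) w 0 j * ((m == mon1 (@mvar k n i j))%:R * xpow x m))); last first.
  by move=> m _; rewrite mulr_suml; apply: eq_bigr => j _; rewrite mulrA.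
rewrite msum_sum; apply: eq_bigr => j _.
by rewrite msumZ msum_delta ?mdeg_mon1 // xpow_mon1.
Qed.

Lemma unit_mon (k : nat) (n : 'I_k -> nat) i (m : monomial n) :
  mdeg m = unitmd i -> exists j, m = mon1 (@mvar k n i j).
Proof.
move=> /ffunP h.
have hi := h i; rewrite /mdeg /unitmd !ffunE eqxx in hi.
have [j hj] : exists j, m (@mvar k n i j) != 0%N.
  apply/existsP; apply: contraT; rewrite negb_exists => /forallP h0.
  by rewrite big1 in hi => // j _; apply/eqP; have := h0 j; rewrite negbK.
move: hi; rewrite (bigD1 j) //= => hi.
have hj1 : m (mvar j) = 1%N by move: hi hj; case: (m (mvar j)) => [|[|]] //=.
move: hi; rewrite hj1 => /eqP; rewrite -{2}[1%N]addn0 eqn_add2l sum_nat_eq0 => /forallP hz.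
exists j; apply/ffunP => -[i' j']; rewrite ffunE.
case: (eqVneq i' i) => [e|ne].
  subst i'; rewrite -/(mvar j') mvar_eq_same.
  case: (eqVneq j' j) => [->|nj] //=.
  by apply/eqP; exact: (implyP (hz j') nj).
have hi' := h i'; rewrite /mdeg /unitmd !ffunE (negbTE ne) in hi'.
move/eqP: hi'; rewrite sum_nat_eq0 => /forallP /(_ j') /eqP ->.
case: eqP => // /eqP /mvar_eq e; by rewrite e eqxx in ne.
Qed.

Lemma mon1_eq (k : nat) (n : 'I_k -> nat) i (j0 j : 'I_(n i).+1) :
  (mon1 (@mvar k n i j0) == mon1 (@mvar k n i j)) = (j0 == j).
Proof.
apply/eqP/eqP => [/ffunP /(_ (mvar j0))|->//].
rewrite !ffunE eqxx mvar_eq_same; by case: eqP.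
Qed.

Lemma linform_of (F : fieldType) (k : nat) (n : 'I_k -> nat) i (f : mform F n) :
  homog (unitmd i) f -> f = linform (\row_j f (mon1 (@mvar k n i j))).
Proof.
move=> hf; apply: functional_extensionality => m; rewrite /linform.
case: (eqVneq (f m) 0) => [f0|nz].
  rewrite big1 // => j _; rewrite mxE; case: eqP => [<-|]; by rewrite ?f0 ?mul0r ?mulr0.
have [j0 hj0] := unit_mon (hf m nz); subst m.
rewrite (bigD1 j0) //= mxE eqxx mulr1 big1 ?addr0 // => j nj.
by rewrite mon1_eq eq_sym (negbTE nj) mulr0.
Qed.

Lemma ideal_sum (F : fieldType) (k : nat) (n : 'I_k -> nat) (I : mideal F n) a (T : Type) (r : seq T) (G : T -> mform F n) :
  homog_ideal I -> (forall t, I a (G t)) -> I a (fun m => \sum_(t <- r) G t m).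
Proof.
move=> hI hG; elim: r => [|t r IH].
  have -> : (fun m => \sum_(t <- [::]) G t m) = (fun _ => 0) by apply: functional_extensionality => m; rewrite big_nil.
  exact: hi_zero.
have -> : (fun m => \sum_(t0 <- t :: r) G t0 m) = (fun m => G t m + \sum_(t0 <- r) G t0 m).
  by apply: functional_extensionality => m; rewrite big_cons.
exact: hi_add.
Qed.

Lemma evalf_sum (F : fieldType) (k : nat) (n : 'I_k -> nat) a (T : Type) (r : seq T) (G : T -> mform F n) x :
  evalf a (fun m => \sum_(t <- r) G t m) x = \sum_(t <- r) evalf a (G t) x.
Proof.
rewrite evalfE (@msum_ext _ _ _ _ _ (fun m => \sum_(t <- r) (G t m * xpow x m))); last first.
  by move=> m _; rewrite mulr_suml.
rewrite /msum exchange_big; apply: eq_bigr => t _; by rewrite evalfE.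
Qed.

Lemma evalfD (F : fieldType) (k : nat) (n : 'I_k -> nat) a (f g : mform F n) x :
  evalf a (fun m => f m + g m) x = evalf a f x + evalf a g x.
Proof. by rewrite !evalfE -msumD; apply: msum_ext => m _; rewrite mulrDl. Qed.

Lemma evalfZ (F : fieldType) (k : nat) (n : 'I_k -> nat) a c (f : mform F n) x :
  evalf a (fun m => c * f m) x = c * evalf a f x.
Proof. by rewrite !evalfE -msumZ; apply: msum_ext => m _; rewrite mulrA. Qed.

Lemma evalf0 (F : fieldType) (k : nat) (n : 'I_k -> nat) a (x : var n -> F) :
  evalf a (fun _ => 0) x = 0.
Proof. by rewrite evalfE; apply: etrans (msum0 F n a); apply: msum_ext => m _; rewrite mul0r. Qed.

Lemma linformD (F : fieldType) (k : nat) (n : 'I_k -> nat) i (w1 w2 : 'rV[F]_(n i).+1) :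
  linform (w1 + w2) = (fun m => linform w1 m + linform w2 m).
Proof.
apply: functional_extensionality => m; rewrite /linform -big_split.
by apply: eq_bigr => j _; rewrite mxE mulrDl.
Qed.

Lemma linformZ (F : fieldType) (k : nat) (n : 'I_k -> nat) i c (w : 'rV[F]_(n i).+1) :
  linform (c *: w) = (fun m => c * linform w m).
Proof.
apply: functional_extensionality => m; rewrite /linform mulr_sumr.
by apply: eq_bigr => j _; rewrite mxE mulrA.
Qed.

Lemma linform0 (F : fieldType) (k : nat) (n : 'I_k -> nat) i :
  linform (0 : 'rV[F]_(n i).+1) = (fun _ => 0).
Proof.
apply: functional_extensionality => m; rewrite /linform big1 // => j _.
by rewrite mxE mul0r.
Qed.

Lemma span_exists (F : fieldType) (k : nat) (n : 'I_k -> nat) (I : mideal F n) i :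
  homog_ideal I ->
  exists A : 'M[F]_((n i).+1),
    (forall v : 'rV_(n i).+1, (v <= A)%MS -> I (unitmd i) (linform v)) /\
    (forall w : 'rV_(n i).+1, I (unitmd i) (linform w) -> (w <= A)%MS).
Proof.
move=> hI.
pose W (v : 'rV[F]_(n i).+1) := I (unitmd i) (linform v).
have W0 : W 0 by rewrite /W linform0; exact: hi_zero.
have WD : forall v1 v2, W v1 -> W v2 -> W (v1 + v2).
  by move=> v1 v2 h1 h2; rewrite /W linformD; exact: hi_add.
have WZ : forall c v, W v -> W (c *: v).
  by move=> c v h; rewrite /W linformZ; exact: hi_scale.
suff : forall N (A : 'M[F]_((n i).+1)), (forall v, (v <= A)%MS -> W v) ->
    ((n i).+1 - \rank A <= N)%N ->
    exists A' : 'M[F]_((n i).+1), (forall v, (v <= A')%MS -> W v) /\ (forall w, W w -> (w <= A')%MS).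
  move=> /(_ (n i).+1 (0 : 'M[F]_((n i).+1))); apply.
    by move=> v; rewrite submx0 => /eqP ->.
  exact: leq_subr.
elim=> [|N IH] A hA hN.
  exists A; split=> // w _.
  have : \rank A = (n i).+1.
    by apply/eqP; rewrite eqn_leq rank_leq_col /= -subn_eq0 -leqn0.
  by move=> hr; apply: submx_full; rewrite /row_full hr.
case: (classic (forall w, W w -> (w <= A)%MS)) => [h|]; first by exists A.
move=> /not_all_ex_not [w hw].
have Ww : W w by apply: NNPP => nW; apply: hw => /nW.
have nw : ~~ (w <= A)%MS by apply/negP => h; apply: hw.
have hA' : forall v, (v <= A + w)%MS -> W v.
  move=> v /sub_addsmxP [[u1 u2] /= ->]; apply: WD; first by apply: hA; exact: submxMl.
  have : (u2 *m w <= w)%MS by exact: submxMl.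
  by case/sub_rVP => c ->; exact: WZ.
have hlt : (\rank A < \rank (A + w)%MS)%N.
  apply: rank_ltmx; rewrite ltmxE addsmxSl /= addsmx_sub negb_and nw orbT //.
have hle := rank_leq_col (A + w)%MS.
apply: (IH _ hA'); move: hN hlt hle; lia.
Qed.

Definition proj (F : fieldType) (k : nat) (n : 'I_k -> nat) (P : forall i, 'M[F]_((n i).+1))
  (x : var n -> F) : var n -> F :=
  fun v => \sum_(j' < (n (tag v)).+1) P (tag v) (tagged v) j' * x (@mvar k n (tag v) j').

Lemma addmdC (k : nat) (a b : multideg k) : addmd a b = addmd b a.
Proof. by apply/ffunP => i; rewrite !ffunE addnC. Qed.

Lemma sum_mon1 (k : nat) (n : 'I_k -> nat) (v : var n) : (\sum_u mon1 v u)%N = 1%N.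
Proof.
rewrite (bigD1 v) //= ffunE eqxx big1 // => u nu; by rewrite ffunE (negbTE nu).
Qed.

Lemma claim (F : fieldType) (k : nat) (n : 'I_k -> nat) (I : mideal F n) (P : forall i, 'M[F]_((n i).+1)) :
  homog_ideal I ->
  (forall i (j : 'I_(n i).+1), I (unitmd i) (linform (row j (1 - P i)))) ->
  forall m : monomial n, exists g, I (mdeg m) g /\
    forall x, xpow x m - xpow (proj P x) m = evalf (mdeg m) g x.
Proof.
move=> hI hW m.
have [N hN] : exists N, (\sum_u m u)%N = N by eexists.
elim: N m hN => [|N IH] m hN.
  have hm0 : forall u, m u = 0%N.
    by move=> u; move/eqP: hN; rewrite sum_nat_eq0 => /forallP /(_ u) /eqP.
  exists (fun _ => 0); split; first exact: hi_zero.
  move=> x; rewrite evalf0 /xpow !big1 ?subrr // => u _; by rewrite hm0 expr0.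
have [[i j] hv] : exists v, m v != 0%N.
  apply/existsP; apply: contraT; rewrite negb_exists => /forallP h0.
  move: hN; rewrite big1 // => u _; apply/eqP; have := h0 u; by rewrite negbK.
pose m' : monomial n := [ffun u => (m u - (u == mvar j))%N].
have hm : m = addm m' (mon1 (mvar j)).
  apply/ffunP => u; rewrite !ffunE; case: eqP => [->|_]; last by rewrite subn0 addn0.
  by rewrite subnK // lt0n.
have hN' : (\sum_u m' u)%N = N.
  move: hN; rewrite {1}hm.
  rewrite (eq_bigr (fun u => m' u + mon1 (mvar j) u)%N); last by move=> u _; rewrite ffunE.
  by rewrite big_split /= sum_mon1 addn1 => -[].
have [g' [hg' hev']] := IH m' hN'.
have hdeg : mdeg m = addmd (mdeg m') (unitmd i) by rewrite {1}hm mdeg_add mdeg_mon1.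
pose g : mform F n := fun mm => \sum_(j' < (n i).+1) (P i j j' * mulmon (mon1 (@mvar k n i j')) g' mm)
   + mulmon m' (linform (row j (1 - P i))) mm.
exists g; split.
  rewrite hdeg; apply: (hi_add hI).
    apply: (@ideal_sum F k n I _ _ (index_enum 'I_(n i).+1) (fun t mm => P i j t * mulmon (mon1 (@mvar k n i t)) g' mm) hI) => t.
    apply: (hi_scale hI); rewrite -(@mdeg_mon1 k n i t); exact: hi_mul.
  rewrite addmdC; exact: hi_mul.
move=> x.
have hx : forall y : var n -> F, xpow y m = xpow y m' * y (mvar j).
  by move=> y; rewrite -(xpow_mon1 y (mvar j)) -xpow_add -hm.
rewrite !hx /g evalfD.
rewrite (@evalf_sum _ _ _ _ 'I_(n i).+1 (index_enum _) (fun t mm => P i j t * mulmon (mon1 (@mvar k n i t)) g' mm)).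
under eq_bigr => t _ do rewrite evalfZ (@evalf_mulmon _ _ _ (mdeg m') _ _ _ _ (etrans hdeg (congr1 _ (esym (@mdeg_mon1 k n i t))))) xpow_mon1.
rewrite (@evalf_mulmon _ _ _ (unitmd i) _ _ _ _ (etrans hdeg (addmdC _ _))) evalf_linform.
rewrite -hev'.
have -> : proj P x (mvar j) = \sum_(j' < (n i).+1) P i j j' * x (mvar j') by [].
set S := \sum_(j' < (n i).+1) P i j j' * x (mvar j').
have -> : \sum_(t < (n i).+1) P i j t * (x (mvar t) * (xpow x m' - xpow (proj P x) m'))
   = S * (xpow x m' - xpow (proj P x) m').
  by rewrite /S mulr_suml; apply: eq_bigr => t _; rewrite mulrA.
have -> : \sum_(j' < (n i).+1) (row j (1 - P i)) 0 j' * x (mvar j') = x (mvar j) - S.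
  rewrite (eq_bigr (fun t => ((j == t)%:R * x (mvar t)) - P i j t * x (mvar t))); last first.
    move=> t _; rewrite !mxE mulrBl; congr (_ - _).
  rewrite big_split /= sumrN; congr (_ - _).
  rewrite (bigD1 j) //= eqxx mul1r big1 ?addr0 // => t nt.
  by rewrite eq_sym (negbTE nt) mul0r.
by rewrite /S; ring.
Qed.

Lemma proj_decomp (F : fieldType) (k : nat) (n : 'I_k -> nat) (I : mideal F n)
  (P : forall i, 'M[F]_((n i).+1)) d (p : mform F n) s (xs : 'I_s -> var n -> F) (c : 'I_s -> F) :
  homog_ideal I ->
  (forall i (j : 'I_(n i).+1), I (unitmd i) (linform (row j (1 - P i)))) ->
  in_span_scheme I d p ->
  (forall m, p m = \sum_(t < s) c t * sv d (xs t) m) ->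
  forall m, p m = \sum_(t < s) c t * sv d (proj P (xs t)) m.
Proof.
move=> hI hW hspan hdec m.
case: (eqVneq (mdeg m) d) => hmd; last first.
  rewrite hdec; apply: eq_bigr => t _; by rewrite /sv (negbTE hmd).
have [g [hg hev]] := claim hI hW m.
rewrite hmd in hg hev.
have E : pairing d g p = \sum_(t < s) c t * (xpow (xs t) m - xpow (proj P (xs t)) m).
  have -> : pairing d g p = msum d (fun mm => g mm * p mm) by [].
  rewrite (@msum_ext _ _ _ _ _ (fun mm => \sum_(t < s) c t * (g mm * xpow (xs t) mm))); last first.
    move=> mm hmm; rewrite hdec mulr_sumr; apply: eq_bigr => t _.
    by rewrite /sv hmm eqxx mulrCA.
  rewrite msum_sum; apply: eq_bigr => t _; by rewrite msumZ -evalfE hev.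
have h0 := hspan g hg; rewrite E in h0.
rewrite hdec.
have : \sum_(t < s) c t * sv d (xs t) m - \sum_(t < s) c t * sv d (proj P (xs t)) m = 0.
  rewrite -sumrB; apply: (etrans _ h0); apply: eq_bigr => t _; by rewrite /sv hmd eqxx mulrBr.
by move/eqP; rewrite subr_eq0 => /eqP.
Qed.

Lemma sv_bad (F : fieldType) (k : nat) (n : 'I_k -> nat) (d : multideg k) (y : var n -> F) :
  (forall i, (0 < d i)%N) -> ~ in_product y -> forall m, sv d y m = 0.
Proof.
move=> hd /not_all_ex_not [i nb] m.
have y0 : forall j : 'I_(n i).+1, y (mvar j) = 0.
  move=> j; apply: NNPP => h; apply: nb; exists j; exact/eqP.
rewrite /sv; case: eqP => // hmd.
have [j hj] : exists j : 'I_(n i).+1, m (mvar j) != 0%N.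
  apply/existsP; apply: contraT; rewrite negb_exists => /forallP h0.
  have := hd i; rewrite -hmd /mdeg ffunE big1 // => j _; apply/eqP; have := h0 j; by rewrite negbK.
rewrite (bigD1 (mvar j)) //= y0 expr0n (negbTE hj) mul0r //.
Qed.

Lemma proj_good (F : fieldType) (k : nat) (n : 'I_k -> nat) (I : mideal F n)
  (P : forall i, 'M[F]_((n i).+1)) x :
  homog_ideal I ->
  (forall i (w : 'rV[F]_((n i).+1)), I (unitmd i) (linform w) -> w *m P i = 0) ->
  in_product (proj P x) -> in_spans_proj I (proj P x).
Proof.
move=> hI hperp hprod i; split; first exact: hprod.
move=> f hf.
have hfe := linform_of (hi_homog hI hf).
set wf := \row_j _ in hfe.
rewrite hfe in hf *; rewrite evalf_linform.
have hz := hperp i wf hf.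
rewrite /proj /=.
under eq_bigr do rewrite mulr_sumr.
rewrite exchange_big /= big1 // => j' _.
have := congr1 (fun M : 'rV[F]_((n i).+1) => M 0 j') hz; rewrite !mxE => h.
rewrite (eq_bigr (fun j => (wf 0 j * P i j j') * x (mvar j'))); last by move=> j _; rewrite mulrA.
by rewrite -mulr_suml h mul0r.
Qed.

Theorem mainTheorem7 (F : closedFieldType) (k : nat) (n : 'I_k -> nat)
  (d : multideg k) (hd : forall i, (0 < d i)%N)
  (p : mform F n) (hp : homog d p) (hp0 : exists m, p m != 0)
  (I : mideal F n) (hI : zero_dim_scheme I)
  (hspan : in_span_scheme I d p)
  (hmin : forall J : mideal F n, closed_subscheme J -> subscheme J I ->
            (exists a f, J a f /\ ~ I a f) -> ~ in_span_scheme J d p) :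
  forall r : nat,
    is_rank (@in_product F k n) d p r <-> is_rank (in_spans_proj I) d p r.
Proof.
have hI0 : homog_ideal I by case: hI => [[]].
have hA := fun i => @span_exists F k n I i hI0.
pose Af i := proj1_sig (constructive_indefinite_description _ (hA i)).
have hAf : forall i, _ := fun i => proj2_sig (constructive_indefinite_description _ (hA i)).
pose P i : 'M[F]_((n i).+1) := 1 - pinvmx (Af i) *m Af i.
have hW : forall i (j : 'I_(n i).+1), I (unitmd i) (linform (row j (1 - P i))).
  move=> i j; apply: (hAf i).1.
  have -> : 1 - P i = pinvmx (Af i) *m Af i by rewrite /P opprB addrC subrK.
  by rewrite row_mul submxMl.
have hperp : forall i (w : 'rV[F]_((n i).+1)), I (unitmd i) (linform w) -> w *m P i = 0.
  move=> i w hw; have hle := (hAf i).2 w hw.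
  by rewrite /P mulmxBr mulmx1 mulmxA mulmxKpV // subrr.
have red : forall s, rank_le (@in_product F k n) d p s -> rank_le (in_spans_proj I) d p s.
  move=> s [xs [c [_ hdec]]].
  have hdec' := proj_decomp hI0 hW hspan hdec.
  pose ys t := proj P (xs t).
  case: (classic (exists t0, in_product (ys t0))) => [[t0 ht0]|nog]; last first.
    case: hp0 => m; rewrite hdec' big1 ?eqxx // => t _.
    rewrite sv_bad ?mulr0 // => hg; apply: nog; by exists t.
  pose gb t : bool := if excluded_middle_informative (in_product (ys t)) then true else false.
  exists (fun t => if gb t then ys t else ys t0), (fun t => if gb t then c t else 0); split.
    move=> t; rewrite /gb; case: excluded_middle_informative => h; exact: proj_good.
  move=> m; rewrite hdec'; apply: eq_bigr => t _; rewrite /gb.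
  case: excluded_middle_informative => // hb.
  by rewrite sv_bad ?mulr0 ?mul0r.
have inc : forall s, rank_le (in_spans_proj I) d p s -> rank_le (@in_product F k n) d p s.
  move=> s [xs [c [hx hdec]]]; exists xs, c; split=> // t i; exact: (hx t i).1.
move=> r; split=> [[h1 h2]|[h1 h2]]; split.
- exact: red.
- by move=> s hs /inc; exact: h2.
- exact: inc.
- by move=> s hs /red; exact: h2.
Qed.
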